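(* Let $(S,\rightarrow)$ be a PNTS, $\phi$ a {\L}ukasiewicz modal $\mu$-calculus formula and $\rho$ an interpretation of the variables and propositional letters. Then, for all $s\in S$, \[ [\![\mathbb{P}_{\rtimes q}\phi]\!]_\rho(s)= \begin{cases} 1 & \text{if } [\![\phi]\!]_\rho (s) \rtimes q \\ 0 & \text{otherwise.}\end{cases} \]
   Context: $\mathcal{D}(S)=\{d:S\to[0,1]\mid \sum_{s\in S}d(s)=1\}$ is the set of discrete probability distributions on $S$. A probabilistic nondeterministic transition system (PNTS) is a pair $(S,\rightarrow)$ with $S$ a set of states and $\rightarrow\ \subseteq S\times\mathcal{D}(S)$. Formulas of the {\L}ukasiewicz modal $\mu$-calculus are generated by $\phi ::= X \mid P \mid \overline{P} \mid q\,\phi \mid \phi\sqcup\phi \mid \phi\sqcap\phi \mid \phi\oplus\phi \mid \phi\odot\phi \mid \Diamond\phi \mid \Box\phi \mid \mu X.\phi \mid \nu X.\phi$, with $q$ rational in $[0,1]$, $X$ a variable, $P$ a propositional letter with complement $\overline{P}$; $\underline{1}$ denotes $\nu X.X$ and $\underline{q}$ denotes $q\,\underline{1}$. An interpretation is $\rho:(\mathrm{Var}\uplus\mathrm{Prop})\to(S\to[0,1])$ with $\rho(\overline{P})(x)=1-\rho(P)(x)$. Semantics $[\![\phi]\!]_\rho:S\to[0,1]$: $[\![X]\!]_\rho=\rho(X)$, $[\![P]\!]_\rho=\rho(P)$, $[\![\overline P]\!]_\rho=1-\rho(P)$, $[\![q\,\phi]\!]_\rho(x)=q\cdot[\![\phi]\!]_\rho(x)$,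 $\sqcup,\sqcap$ are pointwise max/min, $[\![\phi\oplus\psi]\!]_\rho(x)=\min\{1,[\![\phi]\!]_\rho(x)+[\![\psi]\!]_\rho(x)\}$, $[\![\phi\odot\psi]\!]_\rho(x)=\max\{0,[\![\phi]\!]_\rho(x)+[\![\psi]\!]_\rho(x)-1\}$, $[\![\Diamond\phi]\!]_\rho(x)=\sup_{x\rightarrow d}\sum_{y\in S}d(y)[\![\phi]\!]_\rho(y)$, $[\![\Box\phi]\!]_\rho(x)=\inf_{x\rightarrow d}\sum_{y\in S}d(y)[\![\phi]\!]_\rho(y)$ (the empty sup is $0$, the empty inf is $1$), and $\mu X.\phi$, $\nu X.\phi$ denote the least and greatest fixed points of $f\mapsto[\![\phi]\!]_{\rho[f/X]}$. Threshold modalities: $\mathbb{P}_{>0}\phi=\mu Y.(Y\oplus\phi)$, $\mathbb{P}_{=1}\phi=\nu Y.(Y\odot\phi)$, and for $r\in(0,1)$, $\mathbb{P}_{>r}\phi=\mathbb{P}_{>0}(\phi\odot\underline{1-r})$, $\mathbb{P}_{\geq r}\phi=\mathbb{P}_{=1}(\phi\oplus\underline{1-r})$, where $Y$ does not occur in $\phi$; $\mathbb{P}_{\rtimes q}$ denotes any of these four, with $\rtimes q$ the corresponding condition $>0$, $=1$, $>r$, $\geq r$. *)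

(* Defs.v *)
From HB Require Import structures.
From mathcomp Require Import all_boot all_order all_algebra.
From mathcomp Require Import boolp classical_sets reals constructive_ereal ereal esum.
Set Implicit Arguments. Unset Strict Implicit. Unset Printing Implicit Defensive.
Import Order.TTheory GRing.Theory Num.Theory.
Local Open Scope classical_set_scope.
Local Open Scope ring_scope.

Inductive formula : Type :=
| FVar  of nat
| FProp of nat
| FNProp of nat
| FScale of rat & formula
| FMax  of formula & formula
| FMin  of formula & formula
| FOplus of formula & formula
| FOdot of formula & formula
| FDia  of formula
| FBox  of formula
| FMu   of nat & formula
| FNu   of nat & formula.

Fixpoint wf_formula (f : formula) : Prop :=
  match f with
  | FVar _ | FProp _ | FNProp _ => True
  | FScale q g => (0 <= q <= 1)%R /\ wf_formula g
  | FMax g h | FMin g h | FOplus g h | FOdot g h => wf_formula g /\ wf_formula h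
  | FDia g | FBox g => wf_formula g
  | FMu _ g | FNu _ g => wf_formula g
  end.

Fixpoint occurs (Y : nat) (f : formula) : Prop :=
  match f with
  | FVar X => X = Y
  | FProp _ | FNProp _ => False
  | FScale _ g => occurs Y g
  | FMax g h | FMin g h | FOplus g h | FOdot g h => occurs Y g \/ occurs Y h
  | FDia g | FBox g => occurs Y g
  | FMu X g | FNu X g => X = Y \/ occurs Y g
  end.

Section Semantics.
Variables (R : realType) (S : choiceType).

Definition is_distr (d : S -> R) : Prop :=
  (forall s, 0 <= d s <= 1) /\ (\esum_(s in [set: S]) (d s)%:E = 1)%E.

Definition is_pnts (trans : S -> (S -> R) -> Prop) : Prop :=
  forall x d, trans x d -> is_distr d.

Definition unit_fun (g : S -> R) : Prop := forall s, 0 <= g s <= 1.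

Definition expect (d f : S -> R) : R :=
  fine (\esum_(y in [set: S]) (d y * f y)%:E).

(* least / greatest fixed points of F on the complete lattice S -> [0,1]
   (Knaster-Tarski: meet of prefixed points / join of postfixed points) *)
Definition lfp (F : (S -> R) -> (S -> R)) : S -> R := fun x =>
  inf [set g x | g in [set g | unit_fun g /\ (forall y, F g y <= g y)]].
Definition gfp (F : (S -> R) -> (S -> R)) : S -> R := fun x =>
  sup [set g x | g in [set g | unit_fun g /\ (forall y, g y <= F g y)]].

Definition upd (rho : nat -> S -> R) (X : nat) (g : S -> R) : nat -> S -> R :=
  fun Z => if Z == X then g else rho Z.

Variable trans : S -> (S -> R) -> Prop.

Definition dia (f : S -> R) : S -> R := fun x =>
  if `[< exists d, trans x d >] then sup [set expect d f | d in trans x] else 0.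
Definition box (f : S -> R) : S -> R := fun x =>
  if `[< exists d, trans x d >] then inf [set expect d f | d in trans x] else 1.

Fixpoint sem (f : formula) (rhov rhop : nat -> S -> R) : S -> R :=
  match f with
  | FVar X => rhov X
  | FProp P => rhop P
  | FNProp P => fun x => 1 - rhop P x
  | FScale q g => fun x => ratr q * sem g rhov rhop x
  | FMax g h => fun x => Num.max (sem g rhov rhop x) (sem h rhov rhop x)
  | FMin g h => fun x => Num.min (sem g rhov rhop x) (sem h rhov rhop x)
  | FOplus g h => fun x => Num.min 1 (sem g rhov rhop x + sem h rhov rhop x)
  | FOdot g h => fun x => Num.max 0 (sem g rhov rhop x + sem h rhov rhop x - 1)
  | FDia g => dia (sem g rhov rhop)
  | FBox g => box (sem g rhov rhop)
  | FMu X g => lfp (fun v => sem g (upd rhov X v) rhop)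
  | FNu X g => gfp (fun v => sem g (upd rhov X v) rhop)
  end.

End Semantics.

Definition fone : formula := FNu 0 (FVar 0).
Definition fconst (q : rat) : formula := FScale q fone.

Inductive threshold : Type :=
| ThGt0 | ThEq1 | ThGt of rat | ThGe of rat.

Definition wf_threshold (t : threshold) : Prop :=
  match t with
  | ThGt0 | ThEq1 => True
  | ThGt r | ThGe r => (0 < r < 1)%R
  end.

Definition PGt0 (Y : nat) (f : formula) : formula := FMu Y (FOplus (FVar Y) f).
Definition PEq1 (Y : nat) (f : formula) : formula := FNu Y (FOdot (FVar Y) f).

Definition thr_formula (t : threshold) (Y : nat) (f : formula) : formula :=
  match t with
  | ThGt0 => PGt0 Y f
  | ThEq1 => PEq1 Y f
  | ThGt r => PGt0 Y (FOdot f (fconst (1 - r)))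
  | ThGe r => PEq1 Y (FOplus f (fconst (1 - r)))
  end.

Definition thr_holds {R : realType} (t : threshold) (v : R) : bool :=
  match t with
  | ThGt0 => 0 < v
  | ThEq1 => v == 1
  | ThGt r => ratr r < v
  | ThGe r => ratr r <= v
  end.

(* Main.v *)
Require Import Defs.
From HB Require Import structures.
From mathcomp Require Import all_boot all_order all_algebra.
From mathcomp Require Import boolp classical_sets reals constructive_ereal ereal esum.
From mathcomp Require Import lra.
Import Order.TTheory GRing.Theory Num.Theory.
Local Open Scope ring_scope.

Section Proofs.
Variables (R : realType) (S : choiceType) (trans : S -> (S -> R) -> Prop).

Lemma inf_eqc (E : set R) c : E c -> (forall x, E x -> c <= x) -> inf E = c.
Proof.
move=> Ec lb; apply/le_anti/andP; split.
- by apply: (ge_inf _ Ec); exists c.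
- by apply: lb_le_inf; [exists c|].
Qed.

Lemma sup_eqc (E : set R) c : E c -> (forall x, E x -> x <= c) -> sup E = c.
Proof.
move=> Ec ub; apply/le_anti/andP; split.
- by apply: ge_sup; [exists c|].
- by apply: (ub_le_sup _ Ec); exists c.
Qed.

Lemma upd_unit (rhov : nat -> S -> R) X g :
  (forall Z, unit_fun (rhov Z)) -> unit_fun g -> forall Z, unit_fun (upd rhov X g Z).
Proof. by move=> H Hg Z; rewrite /upd; case: eqP. Qed.

Lemma unit1 : unit_fun (fun _ : S => 1 : R).
Proof. by move=> y; rewrite lexx ler01. Qed.
Lemma unit0 : unit_fun (fun _ : S => 0 : R).
Proof. by move=> y; rewrite lexx ler01. Qed.

Lemma upd_comm (rhov : nat -> S -> R) X Y v w : X <> Y ->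
  upd (upd rhov Y v) X w = upd (upd rhov X w) Y v.
Proof.
move=> XY; apply: funext => Z; rewrite /upd.
case: eqP => [->|]; case: eqP => // ->; by [].
Qed.

Lemma sem_notocc (rhop : nat -> S -> R) f : forall rhov Y v, ~ occurs Y f ->
  sem trans f (upd rhov Y v) rhop = sem trans f rhov rhop.
Proof.
elim: f => /=.
- by move=> X rhov Y v H; rewrite /upd; case: eqP.
- by [].
- by [].
- by move=> q g IH rhov Y v H; rewrite IH.
- by move=> g IHg h IHh rhov Y v H; rewrite IHg ?IHh // => ?; apply: H; tauto.
- by move=> g IHg h IHh rhov Y v H; rewrite IHg ?IHh // => ?; apply: H; tauto.
- by move=> g IHg h IHh rhov Y v H; rewrite IHg ?IHh // => ?; apply: H; tauto.
- by move=> g IHg h IHh rhov Y v H; rewrite IHg ?IHh // => ?; apply: H; tauto.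
- by move=> g IH rhov Y v H; rewrite IH.
- by move=> g IH rhov Y v H; rewrite IH.
- move=> X g IH rhov Y v H; congr lfp; apply: funext => w.
  rewrite upd_comm; last by move=> E; apply: H; left.
  by rewrite IH // => ?; apply: H; right.
- move=> X g IH rhov Y v H; congr gfp; apply: funext => w.
  rewrite upd_comm; last by move=> E; apply: H; left.
  by rewrite IH // => ?; apply: H; right.
Qed.

Lemma expect_unit (d f : S -> R) : is_distr d -> unit_fun f -> 0 <= expect d f <= 1.
Proof.
move=> [d01 d1] f01; rewrite /expect.
have e0 : (0 <= \esum_(y in [set: S]) (d y * f y)%:E)%E.
  apply: esum_ge0 => y _; rewrite lee_fin.
  by have /andP[? _] := d01 y; have /andP[? _] := f01 y; rewrite mulr_ge0.
have e1 : (\esum_(y in [set: S]) (d y * f y)%:E <= 1)%E.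
  rewrite -d1; apply: le_esum => y _; rewrite lee_fin.
  by have /andP[? _] := d01 y; have /andP[_ ?] := f01 y; rewrite ler_piMr.
move: e0 e1; case: (\esum_(y in _) _)%E => [r| |] //=.
by rewrite !lee_fin => -> ->.
Qed.

Lemma sem_unit (rhop : nat -> S -> R) (Htrans : is_pnts trans)
  (Hrhop : forall P, unit_fun (rhop P)) f :
  wf_formula f -> forall rhov, (forall X, unit_fun (rhov X)) ->
  unit_fun (sem trans f rhov rhop).
Proof.
elim: f => /=.
- by move=> X _ rhov H.
- by move=> P _ rhov _.
- move=> P _ rhov _ x; have /andP[h1 h2] := Hrhop P x.
  apply/andP; split; lra.
- move=> q g IH [/andP[q0 q1] wg] rhov H x.
  have /andP[h1 h2] := IH wg rhov H x.
  have r0 : 0 <= ratr q :> R by rewrite ler0q.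
  have r1 : ratr q <= 1 :> R by rewrite -(rmorph1 (ratr : rat -> R)) ler_rat.
  by rewrite mulr_ge0 //= mulr_ile1.
- move=> g IHg h IHh [wg wh] rhov H x.
  have /andP[a1 a2] := IHg wg rhov H x; have /andP[b1 b2] := IHh wh rhov H x.
  by rewrite le_max ge_max a1 a2 b2.
- move=> g IHg h IHh [wg wh] rhov H x.
  have /andP[a1 a2] := IHg wg rhov H x; have /andP[b1 b2] := IHh wh rhov H x.
  by rewrite le_min ge_min a1 a2 b1.
- move=> g IHg h IHh [wg wh] rhov H x.
  have /andP[a1 a2] := IHg wg rhov H x; have /andP[b1 b2] := IHh wh rhov H x.
  rewrite le_min ge_min lexx orTb andbT ler01 /=; lra.
- move=> g IHg h IHh [wg wh] rhov H x.
  have /andP[a1 a2] := IHg wg rhov H x; have /andP[b1 b2] := IHh wh rhov H x.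
  apply/andP; split; [by rewrite le_max lexx | rewrite ge_max ler01 /=; lra].
- move=> g IH wg rhov H x; rewrite /dia; case: asboolP => [[d0 td0]|_]; last first.
    by rewrite lexx ler01.
  have hu := IH wg rhov H.
  set E := image _ _.
  have B : forall y, E y -> 0 <= y <= 1.
    by move=> _ [d td <-]; apply: expect_unit => //; apply: Htrans td.
  have Ed : E (expect d0 (sem trans g rhov rhop)) by exists d0.
  apply/andP; split.
  + have /andP[e0 _] := B _ Ed; apply: le_trans e0 _.
    by apply: (ub_le_sup _ Ed); exists 1 => y /B /andP[].
  + by apply: ge_sup; [exists (expect d0 (sem trans g rhov rhop))| move=> y /B /andP[]].
- move=> g IH wg rhov H x; rewrite /box; case: asboolP => [[d0 td0]|_]; last first.
    by rewrite lexx ler01.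
  have hu := IH wg rhov H.
  set E := image _ _.
  have B : forall y, E y -> 0 <= y <= 1.
    by move=> _ [d td <-]; apply: expect_unit => //; apply: Htrans td.
  have Ed : E (expect d0 (sem trans g rhov rhop)) by exists d0.
  apply/andP; split.
  + by apply: lb_le_inf; [exists (expect d0 (sem trans g rhov rhop))| move=> y /B /andP[]].
  + have /andP[_ e1] := B _ Ed; apply: le_trans _ e1.
    by apply: (ge_inf _ Ed); exists 0 => y /B /andP[].
- move=> X g IH wg rhov H x; rewrite /lfp.
  set E := image _ _.
  have EB : forall y, E y -> 0 <= y <= 1 by move=> _ [h [hu _] <-]; apply: hu.
  have E1 : E 1.
    exists (fun _ => 1) => //; split; first by move=> y; rewrite lexx ler01.
    move=> y; have /andP[_ ->] // := IH wg _ (@upd_unit rhov X _ H unit1) y.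
  apply/andP; split.
  + by apply: lb_le_inf; [exists 1|move=> y /EB /andP[]].
  + by apply: (ge_inf _ E1); exists 0 => y /EB /andP[].
- move=> X g IH wg rhov H x; rewrite /gfp.
  set E := image _ _.
  have EB : forall y, E y -> 0 <= y <= 1 by move=> _ [h [hu _] <-]; apply: hu.
  have E0 : E 0.
    exists (fun _ => 0) => //; split; first by move=> y; rewrite lexx ler01.
    move=> y; have /andP[-> _] // := IH wg _ (@upd_unit rhov X _ H unit0) y.
  apply/andP; split.
  + by apply: (ub_le_sup _ E0); exists 1 => y /EB /andP[].
  + by apply: ge_sup; [exists 0|move=> y /EB /andP[]].
Qed.

Lemma lfp_pgt0 (a : S -> R) s :
  lfp (fun v x => Num.min 1 (v x + a x)) s = if 0 < a s then 1 else 0.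
Proof.
rewrite /lfp; case: ifPn => as0.
- apply: inf_eqc.
    exists (fun _ => 1) => //; split; first by move=> y; rewrite lexx ler01.
    by move=> y; rewrite ge_min lexx.
  move=> _ [g [gu gp] <-].
  have := gp s; have /andP[g0 g1] := gu s.
  rewrite ge_min => /orP[//|h]; lra.
- apply: inf_eqc; last by move=> _ [g [gu _] <-]; have /andP[] := gu s.
  exists (fun y => if 0 < a y then 1 else 0); last by rewrite (negbTE as0).
  split; first by move=> y; case: ifP; rewrite lexx ler01.
  move=> y; case: ifPn => h; first by rewrite ge_min lexx.
  by rewrite ge_min add0r; apply/orP; right; rewrite leNgt.
Qed.

Lemma gfp_peq1 (a : S -> R) s :
  gfp (fun v x => Num.max 0 (v x + a x - 1)) s = if 1 <= a s then 1 else 0.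
Proof.
rewrite /gfp; case: ifPn => as1.
- apply: sup_eqc; last by move=> _ [g [gu _] <-]; have /andP[] := gu s.
  exists (fun y => if 1 <= a y then 1 else 0); last by rewrite as1.
  split; first by move=> y; case: ifP; rewrite lexx ler01.
  move=> y; case: ifPn => h; last by rewrite le_max lexx.
  rewrite le_max; apply/orP; right; lra.
- apply: sup_eqc.
    exists (fun _ => 0) => //; split; first by move=> y; rewrite lexx ler01.
    by move=> y; rewrite le_max lexx.
  move=> _ [g [gu gp] <-].
  have := gp s; have /andP[g0 g1] := gu s.
  rewrite le_max => /orP[//|h].
  rewrite -ltNge in as1; lra.
Qed.

Lemma sem_fone (rhov rhop : nat -> S -> R) : sem trans fone rhov rhop = fun _ => 1.
Proof.
apply: funext => x /=; rewrite /gfp.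
apply: sup_eqc.
  by exists (fun _ => 1) => //; split => [|y]; [exact: unit1|rewrite /upd eqxx].
by move=> _ [g [gu _] <-]; have /andP[] := gu x.
Qed.

Lemma upd_eq (rhov : nat -> S -> R) X g : upd rhov X g X = g.
Proof. by rewrite /upd eqxx. Qed.

Lemma sem_odot f g rhov rhop x : sem trans (FOdot f g) rhov rhop x =
  Num.max 0 (sem trans f rhov rhop x + sem trans g rhov rhop x - 1).
Proof. by []. Qed.

Lemma sem_oplus f g rhov rhop x : sem trans (FOplus f g) rhov rhop x =
  Num.min 1 (sem trans f rhov rhop x + sem trans g rhov rhop x).
Proof. by []. Qed.

Lemma sem_fconst q rhov rhop x : sem trans (fconst q) rhov rhop x = ratr q * 1.
Proof. by rewrite -[LHS]/(ratr q * sem trans fone rhov rhop x) sem_fone. Qed.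

Lemma sem_PGt0 Y f rhov rhop (a : S -> R) s :
  (forall v, sem trans f (upd rhov Y v) rhop = a) ->
  sem trans (PGt0 Y f) rhov rhop s = if 0 < a s then 1 else 0.
Proof.
move=> Ha.
rewrite -[LHS]/(lfp (fun v x => Num.min 1 (upd rhov Y v Y x + sem trans f (upd rhov Y v) rhop x)) s).
have -> : (fun v x => Num.min 1 (upd rhov Y v Y x + sem trans f (upd rhov Y v) rhop x))
            = (fun v x => Num.min 1 (v x + a x)).
  by apply: funext => v; rewrite upd_eq Ha.
exact: lfp_pgt0.
Qed.

Lemma sem_PEq1 Y f rhov rhop (a : S -> R) s :
  (forall v, sem trans f (upd rhov Y v) rhop = a) ->
  sem trans (PEq1 Y f) rhov rhop s = if 1 <= a s then 1 else 0.
Proof.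
move=> Ha.
rewrite -[LHS]/(gfp (fun v x => Num.max 0 (upd rhov Y v Y x + sem trans f (upd rhov Y v) rhop x - 1)) s).
have -> : (fun v x => Num.max 0 (upd rhov Y v Y x + sem trans f (upd rhov Y v) rhop x - 1))
            = (fun v x => Num.max 0 (v x + a x - 1)).
  by apply: funext => v; rewrite upd_eq Ha.
exact: gfp_peq1.
Qed.

End Proofs.

Theorem mainTheorem4 (R : realType) (S : choiceType)
  (trans : S -> (S -> R) -> Prop) (Htrans : is_pnts trans)
  (phi : formula) (Hphi : wf_formula phi)
  (rhov rhop : nat -> S -> R)
  (Hrhov : forall X, unit_fun (rhov X)) (Hrhop : forall P, unit_fun (rhop P))
  (t : threshold) (Ht : wf_threshold t)
  (Y : nat) (HY : ~ occurs Y phi) (s : S) :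
  sem trans (thr_formula t Y phi) rhov rhop s =
  (if thr_holds t (sem trans phi rhov rhop s) then 1 else 0).
Proof.
set a := sem trans phi rhov rhop.
have Ha : forall v, sem trans phi (upd rhov Y v) rhop = a.
  by move=> v; rewrite sem_notocc.
have HR : ratr 1 = 1 :> R by rewrite rmorph1.
case: t Ht => [_|_|r _|r _].
- have -> : sem trans (thr_formula ThGt0 Y phi) rhov rhop s = if 0 < a s then 1 else 0.
    by apply: sem_PGt0.
  by [].
- have -> : sem trans (thr_formula ThEq1 Y phi) rhov rhop s = if 1 <= a s then 1 else 0.
    by apply: sem_PEq1.
  have /andP[_ h1] := @sem_unit R S trans rhop Htrans Hrhop phi Hphi rhov Hrhov s.
  by rewrite /= -/a eq_le h1.
- set b := fun x => Num.max 0 (a x + (1 - ratr r) * 1 - 1).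
  have -> : sem trans (thr_formula (ThGt r) Y phi) rhov rhop s = if 0 < b s then 1 else 0.
    apply: sem_PGt0 => v; apply: funext => x.
    by rewrite sem_odot Ha sem_fconst rmorphB /= HR.
  rewrite /b lt_max ltxx /=.
  by congr (if _ then _ else _); apply/idP/idP => h; lra.
- set b := fun x => Num.min 1 (a x + (1 - ratr r) * 1).
  have -> : sem trans (thr_formula (ThGe r) Y phi) rhov rhop s = if 1 <= b s then 1 else 0.
    apply: sem_PEq1 => v; apply: funext => x.
    by rewrite sem_oplus Ha sem_fconst rmorphB /= HR.
  rewrite /b le_min lexx /=.
  by congr (if _ then _ else _); apply/idP/idP => h; lra.
Qed.
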